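(* Let $G=(V,E)$ be a graph and consider an exponential bottleneck routing game on $G$ with $N$ players, where player $\pi_i$ has a strategy set $\mathcal{P}_i$ of paths in $G$ from $u_i$ to $v_i$, and let $L=\max\{|p| : p\in \bigcup_i \mathcal{P}_i\}$ be the maximum length of a path in the players' strategy sets. Then the price of anarchy (over pure Nash-routings, with respect to the social cost $C$) satisfies $$PoA = O(\log L \cdot \log |E|),$$ i.e. for every Nash-routing $\mathbf{p}$ and every routing $\mathbf{p}^*$ minimizing the social cost, $C(\mathbf{p})/C(\mathbf{p}^* ) = O(\log L\cdot \log|E|)$, where the implied constant is absolute.
   Context: A routing (pure strategy profile) is $\mathbf{p}=[p_1,\dots,p_N]$ with $p_i\in\mathcal{P}_i$. For an edge $e$, its congestion $C_e(\mathbf{p})$ is the number of paths of $\mathbf{p}$ using $e$. The social cost is $C(\mathbf{p})=\max_{e\in E} C_e(\mathbf{p})$. In an exponential bottleneck game the cost of player $\pi_i$ is $\widetilde C_i(\mathbf{p})=\sum_{e\in p_i} 2^{C_e(\mathbf{p})}$. A routing $\mathbf{p}$ is a Nash-routing if no player can lower its cost by unilaterally changing its path to another path of its strategy set: $\widetilde C_i(\mathbf{p})\le \widetilde C_i(p_i';\mathbf{p}_{-i})$ for all $i$ and all $p_i'\in\mathcal{P}_i$. The price of anarchy is $\sup_{\mathbf{p}} C(\mathbf{p})/C^*$ over Nash-routings $\mathbf{p}$, where $C^*$ is the minimum of $C$ over all routings. Logarithms are base 2. *)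

(* Defs.v *)
From Stdlib Require Import Reals.
From mathcomp Require Import all_boot.

Set Implicit Arguments.
Unset Strict Implicit.
Unset Printing Implicit Defensive.

(* A (multi)graph G = (V, E): finite vertex type V, finite edge type E,
   each edge e has endpoints [ends e]. Edges are traversed in either
   direction (undirected graph). *)

Fixpoint is_walk (V : eqType) (E : Type) (ends : E -> V * V)
    (u : V) (s : seq E) (v : V) : bool :=
  match s with
  | [::] => u == v
  | e :: s' =>
      ((ends e).1 == u) && is_walk ends (ends e).2 s' v
      || ((ends e).2 == u) && is_walk ends (ends e).1 s' v
  end.

Definition is_path (V : eqType) (E : eqType) (ends : E -> V * V)
    (u : V) (p : seq E) (v : V) : bool :=
  is_walk ends u p v && uniq p.

Section Game.
Variables (E : finType) (N : nat).

Definition routing := 'I_N -> seq E.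

Definition is_routing (P : 'I_N -> seq (seq E)) (r : routing) : Prop :=
  forall i, r i \in P i.

Definition congestion (r : routing) (e : E) : nat :=
  #|[set i : 'I_N | e \in r i]|.

Definition social_cost (r : routing) : nat :=
  \max_(e : E) congestion r e.

Definition player_cost (r : routing) (i : 'I_N) : nat :=
  \sum_(e <- r i) 2 ^ congestion r e.

Definition deviate (r : routing) (i : 'I_N) (q : seq E) : routing :=
  fun j => if j == i then q else r j.

Definition is_nash (P : 'I_N -> seq (seq E)) (r : routing) : Prop :=
  is_routing P r /\
  forall i q, q \in P i -> player_cost r i <= player_cost (deviate r i q) i.

Definition is_optimal (P : 'I_N -> seq (seq E)) (r : routing) : Prop :=
  is_routing P r /\
  forall r', is_routing P r' -> social_cost r <= social_cost r'.

Definition max_path_len (P : 'I_N -> seq (seq E)) : nat :=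
  \max_(i : 'I_N) \max_(p <- P i) size p.

End Game.

Definition log2 (x : R) : R := Rdiv (ln x) (ln (IZR 2)).

(* Main.v *)
Require Import Defs.
From Stdlib Require Import Reals Lra.
From mathcomp Require Import all_boot.
From mathcomp Require Import zify.

Lemma cong_dev (E : finType) (N : nat) (r : routing E N) i q e :
  congestion (deviate r i q) e <= (congestion r e).+1.
Proof.
rewrite /congestion.
apply: (leq_trans (subset_leq_card (_ : _ \subset i |: [set j | e \in r j]))).
  apply/subsetP => j; rewrite !inE /deviate; case: (j =P i) => [->|_] /=.
    by [].
  by [].
rewrite cardsU1; case: (_ \notin _) => /=; lia.
Qed.

Lemma sum_exch (E : finType) (N : nat) (h : 'I_N -> seq E) (f : E -> nat) :
  (forall i, uniq (h i)) ->
  \sum_i \sum_(e <- h i) f e = \sum_e #|[set i | e \in h i]| * f e.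
Proof.
move=> U.
under eq_bigr => i _ do rewrite (big_uniq _ (U i)) big_mkcond /=.
rewrite exchange_big /=; apply: eq_bigr => e _.
rewrite -sum_nat_const [RHS]big_mkcond /=.
by apply: eq_bigr => i _; rewrite inE.
Qed.

Lemma key (E : finType) (N : nat) (P : 'I_N -> seq (seq E)) r rs :
  (forall i p, p \in P i -> uniq p) ->
  is_nash P r -> is_routing P rs ->
  \sum_e congestion r e * 2 ^ congestion r e <=
  2 * social_cost rs * \sum_e 2 ^ congestion r e.
Proof.
move=> U [Rr Nr] Rs.
rewrite -(@sum_exch _ _ r (fun e => 2 ^ congestion r e)) => [|i]; last exact: U (Rr i).
apply: (@leq_trans (\sum_i \sum_(e <- rs i) 2 * 2 ^ congestion r e)).
  apply: leq_sum => i _; apply: (leq_trans (Nr i (rs i) (Rs i))).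
  rewrite /player_cost /deviate eqxx.
  apply: leq_sum => e _; rewrite -expnS leq_exp2l //; exact: cong_dev.
rewrite (@sum_exch _ _ rs (fun e => 2 * 2 ^ congestion r e)) => [|i]; last exact: U (Rs i).
rewrite big_distrr /=; apply: leq_sum => e _.
rewrite mulnCA -mulnA leq_mul2l /= leq_mul2r; apply/orP; right.
rewrite /social_cost; apply: (leq_trans _ (leq_bigmax e)); done.
Qed.

Lemma split_bound (E : finType) (f : E -> nat) c : 0 < c ->
  \sum_e f e * 2 ^ f e <= 2 * c * \sum_e 2 ^ f e ->
  \sum_e 2 ^ f e <= 2 * #|E| * 2 ^ (4 * c).
Proof.
move=> c0 H.
have Hh : 4 * c * \sum_(e | 4 * c <= f e) 2 ^ f e <= \sum_e f e * 2 ^ f e.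
  rewrite big_distrr /= [X in _ <= X](bigID (fun e => 4 * c <= f e)) /=.
  apply: leq_trans (leq_addr _ _); apply: leq_sum => e He.
  by rewrite leq_mul2r He orbT.
have Hl : \sum_(e | ~~ (4 * c <= f e)) 2 ^ f e <= #|E| * 2 ^ (4 * c).
  apply: (@leq_trans (\sum_(e : E) 2 ^ (4 * c))).
    rewrite [X in _ <= X](bigID (fun e => 4 * c <= f e)) /=.
    apply: leq_trans (leq_addl _ _); apply: leq_sum => e He.
    by rewrite leq_exp2l // ltnW // ltnNge.
  by rewrite sum_nat_const.
move: H; rewrite [X in _ <= _ * X](bigID (fun e => 4 * c <= f e)) /= => H.
rewrite (bigID (fun e => 4 * c <= f e)) /=.
move: Hh Hl H.
set a := \sum_(e | 4 * c <= f e) 2 ^ f e.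
set b := \sum_(e | ~~ (4 * c <= f e)) 2 ^ f e.
set s := \sum_e _.
move=> h1 h2 h3.
have : c * a <= c * b by nia.
rewrite leq_pmul2l // => h4.
move: h2; rewrite -mulnA; set K := #|E| * _; lia.
Qed.

Lemma nat_main (E : finType) (N : nat) (P : 'I_N -> seq (seq E)) r rs :
  (forall i p, p \in P i -> uniq p) ->
  is_nash P r -> is_routing P rs ->
  (social_cost rs = 0 -> social_cost r = 0) /\
  (0 < social_cost rs ->
     2 ^ social_cost r <= 2 * #|E| * 2 ^ (4 * social_cost rs)).
Proof.
move=> U Nr Rs; have K := @key E N P r rs U Nr Rs.
split.
  move=> H0; move: K; rewrite H0 muln0 mul0n leqn0 => /eqP K.
  apply/eqP; rewrite -leqn0; apply/bigmax_leqP => e _.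
  move: K; rewrite (bigD1 e) //= => /eqP; rewrite addn_eq0 muln_eq0 => /andP[].
  by rewrite expn_eq0 /= orbF => /eqP ->.
move=> Hc; have W := @split_bound E (congestion r) _ Hc K.
case: (pickP (fun _ : E => true)) => [e0 _|none].
  apply: leq_trans W; rewrite /social_cost (bigmax_eq_arg e0) //.
  set e1 := [arg max_(_ > e0 | _) _].
  by rewrite (bigD1 e1) //= leq_addr.
move: Hc; rewrite /social_cost.
have -> : \max_(e : E) congestion rs e = 0.
  by apply/eqP; rewrite -leqn0; apply/bigmax_leqP => e; rewrite none.
by [].
Qed.

Lemma INR_expn m n : INR (m ^ n)%N = pow (INR m) n.
Proof.
elim: n => [|n IH] //=; by rewrite expnS -multE mult_INR IH.
Qed.

Local Open Scope R_scope.

Lemma ln_le' (x y : R) : (0 < x)%R -> (x <= y)%R -> (ln x <= ln y)%R.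
Proof.
move=> hx hxy; case: (Rle_lt_or_eq_dec _ _ hxy) => h.
  by apply: Rlt_le; apply: ln_increasing.
by rewrite h; apply: Rle_refl.
Qed.

Lemma ln2_pos : (0 < ln 2)%R.
Proof. rewrite -ln_1; apply: ln_increasing; lra. Qed.

Lemma log2_nonneg n : (0 <= log2 (INR n))%R.
Proof.
rewrite /log2; case: n => [|n].
  unfold ln at 1; destruct (Rlt_dec 0 (INR 0)) as [h|h]; [by case: (Rlt_irrefl _ h)|].
  rewrite /Rdiv Rmult_0_l; apply: Rle_refl.
apply: Rmult_le_pos; last by apply: Rlt_le; apply: Rinv_0_lt_compat; exact: ln2_pos.
rewrite -ln_1; apply: ln_le'; first lra.
have := pos_INR n; rewrite S_INR; lra.
Qed.

Lemma real_step (C Cs e : nat) : (0 < Cs)%N ->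
  (2 ^ C <= 2 * e * 2 ^ (4 * Cs))%N ->
  (INR C <= 1 + log2 (INR e) + 4 * INR Cs)%R.
Proof.
move=> hc h.
have he : (0 < e)%N by move: h; case: e => //; rewrite muln0 mul0n leqNgt expn_gt0.
move/leP/le_INR: h => h.
rewrite -!multE in h. rewrite mult_INR in h. rewrite mult_INR in h. rewrite INR_expn in h. rewrite INR_expn in h.
have h2 : (0 < INR e)%R by apply: lt_0_INR; apply/ltP.
have h0 : (0 < INR 2)%R by simpl; lra.
have := ln_le' _ _ (pow_lt _ C h0) h.
rewrite !ln_mult; try lra; try (apply: pow_lt; lra);
  try (apply: Rmult_lt_0_compat; lra).
rewrite !ln_pow; try lra.
rewrite /log2 => hl.
have l2 := ln2_pos.
have e2 : INR 2 = 2 by simpl; lra.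
rewrite e2 in hl.
rewrite mult_INR in hl.
have hq : ln (INR e) = (ln (INR e) / ln 2) * ln 2 by field; lra.
rewrite hq in hl.
move: hl; set q := ln (INR e) / ln 2; set l := ln 2 => hl.
move: hl; have -> : INR 4 = 4 by simpl; lra.
move=> hl; apply: Rnot_lt_le => hc'; have := Rmult_lt_compat_r l _ _ l2 hc'. lra.
Qed.

Theorem mainTheorem1 :
  exists c : R, Rlt 0 c /\
  forall (V E : finType) (ends : E -> V * V) (N : nat)
         (u v : 'I_N -> V) (P : 'I_N -> seq (seq E)),
    (forall i, P i != [::]) ->
    (forall i p, p \in P i -> is_path ends (u i) p (v i)) ->
    forall r rstar : routing E N,
      is_nash P r -> is_optimal P rstar ->
      Rle (INR (social_cost r))
          (Rmult (Rmult (Rmult c (Rplus 1 (log2 (INR (max_path_len P)))))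
                        (Rplus 1 (log2 (INR #|E|))))
                 (INR (social_cost rstar))).
Proof.
exists 5%R; split; first lra.
move=> V E ends N u v P _ Hp r rs Nr [Rs _].
have U : forall i p, p \in P i -> uniq p.
  by move=> i p /(Hp i) /andP[].
have [Z Pos] := @nat_main E N P r rs U Nr Rs.
have la := log2_nonneg (max_path_len P).
have lb := log2_nonneg #|E|.
case: (posnP (social_cost rs)) => [h0|hpos].
  rewrite (Z h0) h0 /= Rmult_0_r; apply: Rle_refl.
have := @real_step _ _ _ hpos (Pos hpos).
have : (1 <= INR (social_cost rs)).
  by apply: (le_INR 1); apply/leP.
set a := log2 (INR (max_path_len P)); set b := log2 (INR #|E|).
set x := INR (social_cost rs).
move=> h1 h2.
have h4 := Rmult_le_compat_l b 1 x lb h1; move: h4 => h4.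
have lb2 : Rle 0 b by exact: lb. have la2 : Rle 0 a by exact: la. clearbody a b x. have h3 : (Rle (INR (social_cost r)) (5 * (1 + b) * x)) by nra.
have h5 : (Rle 0 (5 * (1 + b) * x)) by lra.
have h6 := Rmult_le_compat_l (5 * (1 + b) * x) 0 a h5 la2.
lra.
Qed.
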